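(* Consider the asynchronous stochastic saddle point iteration described in the context, run with a constant step size $\epsilon>0$ and regularization parameter $\delta>0$, and suppose Assumptions (A1)–(A6) of the context hold. Then for every iteration index $t$, every $\mathbf{x}\in\mathcal{X}^N$ and every $\boldsymbol{\lambda}\in\mathbb{R}^M_{+}$, the following holds (for every realization of the data): \[ \hat{\mathcal{L}}_{[\mathbf{t}]}(\mathbf{x}_{[\mathbf{t}]},\boldsymbol{\lambda})-\hat{\mathcal{L}}_{[\mathbf{t}]}(\mathbf{x},\boldsymbol{\lambda}_t) \le \frac{1}{2\epsilon}\Big(\|\mathbf{x}_t-\mathbf{x}\|^2-\|\mathbf{x}_{t+1}-\mathbf{x}\|^2+\|\boldsymbol{\lambda}_t-\boldsymbol{\lambda}\|^2-\|\boldsymbol{\lambda}_{t+1}-\boldsymbol{\lambda}\|^2\Big) \] \[ \qquad+\frac{\epsilon}{2}\Big(\|\nabla_{\boldsymbol{\lambda}}\hat{\mathcal{L}}_{[\mathbf{t}]}(\mathbf{x}_{[\mathbf{t}]},\boldsymbol{\lambda}_t)\|^2+\|\nabla_{\mathbf{x}}\hat{\mathcal{L}}_{[\mathbf{t}]}(\mathbf{x}_{[\mathbf{t}]},\boldsymbol{\lambda}_t)\|^2\Big) +\big\langle \nabla_{\mathbf{x}}\hat{\mathcal{L}}_{[\mathbf{t}]}(\mathbf{x}_{[\mathbf{t}]},\boldsymbol{\lambda}_t),\,\mathbf{x}_{[\mathbf{t}]}-\mathbf{x}_t\big\rangle . \]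
   Context: Network: $\mathcal{G}=(\mathcal{V},\mathcal{E})$ is a directed graph with node set $\mathcal{V}=\{1,\dots,N\}$ and $|\mathcal{E}|=M$ edges; $n_i=\{j:(i,j)\in\mathcal{E}\}$ is the neighborhood of $i$. $\mathcal{X}\subset\mathbb{R}^p$ is a nonempty compact convex set. For each node $i$, $\boldsymbol{\theta}^i$ is a random vector in $\Theta_i\subset\mathbb{R}^q$, and $f^i:\mathcal{X}\times\Theta_i\to\mathbb{R}$ is convex and differentiable in its first argument for every fixed value of the second. For each $(i,j)\in\mathcal{E}$, $h^{ij}:\mathcal{X}\times\mathcal{X}\times\Theta_i\times\Theta_j\to\mathbb{R}$ is jointly convex and differentiable in its first two arguments for every fixed value of the last two, and $\gamma_{ij}\ge 0$. For $\mathbf{x}=(\mathbf{x}^1,\dots,\mathbf{x}^N)\in\mathcal{X}^N$ let $F(\mathbf{x})=\sum_{i=1}^N\mathbb{E}[f^i(\mathbf{x}^i,\boldsymbol{\theta}^i)]$. The underlying problem is $\min_{\mathbf{x}\in\mathcal{X}^N}F(\mathbf{x})$ subject to $\mathbb{E}[h^{ij}(\mathbf{x}^i,\mathbf{x}^j,\boldsymbol{\theta}^i,\boldsymbol{\theta}^j)]\le\gamma_{ij}$ for all $(i,j)\in\mathcal{E}$. Data and delays: at each time $t=1,2,\dots$ node $i$ observes a realization $\boldsymbol{\theta}^i_t$ (i.i.d. copies of $\boldsymbol{\theta}^i$). Each node $i$ has integer delays $\tau_i(t)\ge 0$ with $t-\tau_i(t)\ge 1$ and $\tau_i(t)\le\tau_i(t-1)+1$;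 write $[t]_i:=t-\tau_i(t)$ and $\mathbf{x}_{[\mathbf{t}]}:=(\mathbf{x}^1_{[t]_1},\dots,\mathbf{x}^N_{[t]_N})$. Delayed stochastic augmented Lagrangian: for $\mathbf{x}\in\mathcal{X}^N$ and $\boldsymbol{\lambda}=(\lambda^{ij})_{(i,j)\in\mathcal{E}}\in\mathbb{R}^M$, \[\hat{\mathcal{L}}_{[\mathbf{t}]}(\mathbf{x},\boldsymbol{\lambda})=\sum_{i=1}^N\Big[f^i(\mathbf{x}^i,\boldsymbol{\theta}^i_{[t]_i})+\sum_{j\in n_i}\Big(\lambda^{ij}\big(h^{ij}(\mathbf{x}^i,\mathbf{x}^j,\boldsymbol{\theta}^i_{[t]_i},\boldsymbol{\theta}^j_{[t]_j})-\gamma_{ij}\big)-\tfrac{\delta\epsilon}{2}(\lambda^{ij})^2\Big)\Big],\] and $\nabla_{\mathbf{x}},\nabla_{\boldsymbol{\lambda}}$ denote its partial gradients. Algorithm: start from $\mathbf{x}_1\in\mathcal{X}^N$, $\boldsymbol{\lambda}_1=\mathbf{0}$, and iterate $\mathbf{x}_{t+1}=\mathcal{P}_{\mathcal{X}^N}\big[\mathbf{x}_t-\epsilon\nabla_{\mathbf{x}}\hat{\mathcal{L}}_{[\mathbf{t}]}(\mathbf{x}_{[\mathbf{t}]},\boldsymbol{\lambda}_t)\big]$ and $\boldsymbol{\lambda}_{t+1}=\big[\boldsymbol{\lambda}_t+\epsilon\nabla_{\boldsymbol{\lambda}}\hat{\mathcal{L}}_{[\mathbf{t}]}(\mathbf{x}_{[\mathbf{t}]},\boldsymbol{\lambda}_t)\big]_+$,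 i.e. $\lambda^{ij}_{t+1}=\big[(1-\epsilon^2\delta)\lambda^{ij}_t+\epsilon\big(h^{ij}(\mathbf{x}^i_{[t]_i},\mathbf{x}^j_{[t]_j},\boldsymbol{\theta}^i_{[t]_i},\boldsymbol{\theta}^j_{[t]_j})-\gamma_{ij}\big)\big]_+$. Here $\mathcal{P}_{\mathcal{X}^N}$ is the Euclidean projection onto $\mathcal{X}^N$ and $[\cdot]_+$ is componentwise projection onto the nonnegative orthant. Assumptions: (A1) $\mathcal{G}$ is symmetric ($(i,j)\in\mathcal{E}\iff(j,i)\in\mathcal{E}$) and connected with diameter $D$. (A2) The set of primal-dual optimal pairs of the constrained problem intersects $\mathcal{X}^N\times\mathbb{R}^M_+$. (A3) For all $i$, $t$, $(i,j)\in\mathcal{E}$ and all arguments, $\mathbb{E}\|\nabla_{\mathbf{x}^i}f^i(\mathbf{x}^i,\boldsymbol{\theta}^i_t)\|^2\le\sigma_f^2$ and $\mathbb{E}\|\nabla_{\mathbf{x}^i}h^{ij}(\mathbf{x}^i,\mathbf{x}^j,\boldsymbol{\theta}^i_{[t]_i},\boldsymbol{\theta}^j_{[t]_j})\|^2\le\sigma_h^2$. (A4) $\max_{\mathbf{x}^i,\mathbf{x}^j\in\mathcal{X}}\mathbb{E}[h^{ij}(\mathbf{x}^i,\mathbf{x}^j,\boldsymbol{\theta}^i_t,\boldsymbol{\theta}^j_t)^2]\le\sigma_\lambda^2$ for all $(i,j)\in\mathcal{E}$, $t$. (A5) $|F(\mathbf{x})-F(\mathbf{y})|\le L_f\|\mathbf{x}-\mathbf{y}\|$.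 (A6) $\tau_i(t)\le\tau<\infty$ for all $i,t$. *)

(* Defs.v *)
From HB Require Import structures.
From mathcomp Require Import all_boot all_order all_algebra.
From mathcomp Require Import all_classical all_reals.
From mathcomp Require Import topology normedtype derive.
Set Implicit Arguments. Unset Strict Implicit. Unset Printing Implicit Defensive.
Import Order.TTheory GRing.Theory Num.Theory.
Import numFieldNormedType.Exports.
Local Open Scope classical_set_scope.
Local Open Scope ring_scope.

Section Defs.
Variable R : realType.

Definition convex_set_ {V : lmodType R} (C : set V) : Prop :=
  forall x y (a : R), C x -> C y -> 0 <= a <= 1 -> C (a *: x + (1 - a) *: y).

Definition convex_on {V : lmodType R} (C : set V) (g : V -> R) : Prop :=
  forall x y (a : R), C x -> C y -> 0 <= a <= 1 ->
    g (a *: x + (1 - a) *: y) <= a * g x + (1 - a) * g y.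

(* squared Euclidean norm and Euclidean inner product of a matrix
   (a point of (R^p)^N stored with node i in row i) *)
Definition sqn {m n} (x : 'M[R]_(m, n)) : R := \sum_i \sum_k (x i k) ^+ 2.
Definition ip {m n} (x y : 'M[R]_(m, n)) : R := \sum_i \sum_k x i k * y i k.

Definition mgrad {m n} (F : 'M[R]_(m, n) -> R) (x : 'M[R]_(m, n)) : 'M[R]_(m, n) :=
  \matrix_(i, k) ('D_(delta_mx i k) F x).

Definition is_proj {m n} (C : set 'M[R]_(m, n)) (y z : 'M[R]_(m, n)) : Prop :=
  C z /\ forall w, C w -> sqn (y - z) <= sqn (y - w).

Definition prodset {N p} (X : set 'rV[R]_p) : set 'M[R]_(N, p) :=
  [set x | forall i, X (row i x)].

End Defs.

Definition Edge {N : nat} (e : rel 'I_N) := {ij : 'I_N * 'I_N | e ij.1 ij.2}.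

Definition upd {N : nat} {e : rel 'I_N} {R : Type} (lam : Edge e -> R) (k : Edge e) (s : R)
  : Edge e -> R := fun k' => if k' == k then s else lam k'.

Section Lag.
Variables (R : realType) (N p q : nat) (e : rel 'I_N).
Variables (f : 'I_N -> 'rV[R]_p -> 'rV[R]_q -> R)
          (h : 'I_N -> 'I_N -> 'rV[R]_p * 'rV[R]_p -> 'rV[R]_q -> 'rV[R]_q -> R)
          (gam : 'I_N -> 'I_N -> R) (del eps : R).

(* delayed stochastic augmented Lagrangian, with th i = theta^i_{[t]_i} *)
Definition Lhat (th : 'I_N -> 'rV[R]_q) (x : 'M[R]_(N, p)) (lam : Edge e -> R) : R :=
  \sum_(i < N) (f i (row i x) (th i) +
    \sum_(k : Edge e | (sval k).1 == i)
      (lam k * (h i (sval k).2 (row i x, row (sval k).2 x) (th i) (th (sval k).2)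
                 - gam i (sval k).2)
       - del * eps / 2 * (lam k) ^+ 2)).

Definition gradx th x lam : 'M[R]_(N, p) := mgrad (fun y => Lhat th y lam) x.
Definition gradlam th x lam : Edge e -> R :=
  fun k => derive1 (fun s : R => Lhat th x (upd lam k s)) (lam k).

Definition sqnl (lam : Edge e -> R) : R := \sum_k (lam k) ^+ 2.

End Lag.

(* Main.v *)
Require Import Defs.
From HB Require Import structures.
From mathcomp Require Import all_boot all_order all_algebra.
From mathcomp Require Import all_classical all_reals.
From mathcomp Require Import topology normedtype derive.
From mathcomp Require Import ring lra.
Import Order.TTheory GRing.Theory Num.Theory.
Import numFieldNormedType.Exports.
Local Open Scope classical_set_scope.
Local Open Scope ring_scope.
Lemma dquad (R : realType) (K H c s0 : R) :
  'D_1 (fun s : R => K + (s * H - c * s ^+ 2)) s0 = H - 2 * c * s0.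
Proof.
rewrite /derive; apply: cvg_lim => //.
apply: (@cvg_trans _ ((fun h : R => H - 2 * c * s0 - c * h) @ 0^')).
  apply: near_eq_cvg; near=> h.
  have h0 : h != 0 by near: h; exact: nbhs_dnbhs_neq.
  rewrite /= -[h *: 1]/(h * 1) mulr1 -[X in _ = X]/(h^-1 * _).
  by field.
have L : (fun h : R => H - 2 * c * s0 - c * h) @ 0 --> (H - 2 * c * s0 - c * 0).
  apply: cvgB; first exact: cvg_cst.
  apply: cvgMl_tmp; exact: cvg_id.
rewrite mulr0 subr0 in L.
exact: cvg_within_filter L.
Unshelve. all: by end_near. Qed.

Section IP.
Variables (R : realType) (m n : nat).
Implicit Types (x y z : 'M[R]_(m, n)).

Lemma ipC x y : ip x y = ip y x.
Proof. by rewrite /ip; apply: eq_bigr => i _; apply: eq_bigr => k _; rewrite mulrC. Qed.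

Lemma ipDr x y z : ip x (y + z) = ip x y + ip x z.
Proof.
rewrite /ip -big_split; apply: eq_bigr => i _ /=.
rewrite -big_split; apply: eq_bigr => k _ /=; rewrite !mxE; ring.
Qed.

Lemma ipZr x y (a : R) : ip x (a *: y) = a * ip x y.
Proof.
rewrite /ip mulr_sumr; apply: eq_bigr => i _ /=.
rewrite mulr_sumr; apply: eq_bigr => k _ /=; rewrite !mxE; ring.
Qed.

Lemma ipNr x y : ip x (- y) = - ip x y.
Proof. by rewrite -scaleN1r ipZr mulN1r. Qed.

Lemma ipBr x y z : ip x (y - z) = ip x y - ip x z.
Proof. by rewrite ipDr ipNr. Qed.

Lemma sqnE x : sqn x = ip x x.
Proof. by rewrite /sqn /ip; apply: eq_bigr => i _; apply: eq_bigr => k _; rewrite expr2. Qed.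

Lemma sqn_ge0 x : 0 <= sqn x.
Proof. by apply: sumr_ge0 => i _; apply: sumr_ge0 => k _; exact: sqr_ge0. Qed.

Lemma sqnD x y : sqn (x + y) = sqn x + sqn y + 2 * ip x y.
Proof.
rewrite !sqnE ipDr [ip (x + y) x]ipC [ip (x + y) y]ipC !ipDr [ip y x]ipC; ring.
Qed.

Lemma sqnZ x (a : R) : sqn (a *: x) = a ^+ 2 * sqn x.
Proof. by rewrite !sqnE ipZr ipC ipZr; ring. Qed.

Lemma proj_nonexp (C : set 'M[R]_(m, n)) z P y :
  (forall u v (a : R), C u -> C v -> 0 <= a <= 1 -> C (a *: u + (1 - a) *: v)) ->
  is_proj C z P -> C y -> sqn (P - y) <= sqn (z - y).
Proof.
move=> cC [CP minP] Cy.
set c := ip (z - P) (y - P); set d := sqn (y - P).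
have d0 : 0 <= d by exact: sqn_ge0.
have key : forall a : R, 0 < a <= 1 -> 2 * c <= a * d.
  move=> a /andP[a0 a1].
  have Cw : C (a *: y + (1 - a) *: P) by apply: cC => //; rewrite (ltW a0) a1.
  have := minP _ Cw.
  have -> : z - (a *: y + (1 - a) *: P) = (z - P) + (- a) *: (y - P).
    by apply/matrixP => i j; rewrite !mxE; ring.
  rewrite (sqnD (z - P)) sqnZ ipZr -/c -/d => h.
  have : a * (2 * c) <= a * (a * d) by rewrite -subr_ge0; rewrite -subr_ge0 in h; nra.
  by rewrite ler_pM2l.
have vi : c <= 0.
  case: (lerP c 0) => // c0.
  have := key (c / (c + d)).
  rewrite divr_gt0 ?ltr_wpDr //= ler_pdivrMr ?ltr_wpDr // mul1r lerDl d0 => /(_ isT).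
  rewrite mulrAC ler_pdivlMr ?ltr_wpDr // => h; nra.
have -> : z - y = (z - P) + (P - y) by rewrite addrA subrK.
rewrite (sqnD (z - P)).
have -> : ip (z - P) (P - y) = - c by rewrite /c -ipNr opprB.
have := sqn_ge0 (z - P); lra.
Qed.
End IP.
Lemma ip_mgrad (R : realType) m n (F : 'M[R]_(m, n) -> R) x v :
  differentiable F x -> ip (mgrad F x) v = 'D_v F x.
Proof.
move=> dF; rewrite deriveE // {2}(matrix_sum_delta v) linear_sum /ip.
apply: eq_bigr => i _; rewrite linear_sum; apply: eq_bigr => k _.
rewrite linearZ /= mxE deriveE // mulrC.
by rewrite -[X in _ = X]/(v i k * _).
Qed.

Lemma diff_big (R : realType) (V : normedModType R) (I : Type) (r : seq I) (P : pred I)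
  (g : I -> V -> R) x :
  (forall i, P i -> differentiable (g i) x) ->
  differentiable (fun y => \sum_(i <- r | P i) g i y) x.
Proof.
move=> dg; elim: r => [|a r IH].
  have -> : (fun y => \sum_(i <- [::] | P i) g i y) = cst 0.
    by apply/funext => y; rewrite big_nil.
  exact: differentiable_cst.
case Pa: (P a).
  have -> : (fun y => \sum_(i <- a :: r | P i) g i y) =
            g a + (fun y => \sum_(i <- r | P i) g i y).
    by apply/funext => y; rewrite big_cons Pa.
  by apply: differentiableD => //; exact: dg.
have -> : (fun y => \sum_(i <- a :: r | P i) g i y) =
          (fun y => \sum_(i <- r | P i) g i y).
  by apply/funext => y; rewrite big_cons Pa.
exact: IH.
Qed.

Lemma row_diff (R : realType) m n i (x : 'M[R]_(m, n)) :
  differentiable (fun z : 'M[R]_(m, n) => row i z) x.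
Proof.
apply: (@linear_differentiable _ _ _ (row i)).
move=> M s /= /(nbhs_ballP (row i M)) [r r0 rs].
apply/nbhs_ballP; exists r => // N [r0' MN]; apply: rs; split => // a j.
by rewrite !mxE; exact: MN.
Qed.

Section LagLemmas.
Variables (R : realType) (N p q : nat) (e : rel 'I_N).
Variables (f : 'I_N -> 'rV[R]_p -> 'rV[R]_q -> R)
          (h : 'I_N -> 'I_N -> 'rV[R]_p * 'rV[R]_p -> 'rV[R]_q -> 'rV[R]_q -> R)
          (gam : 'I_N -> 'I_N -> R) (del eps : R).

Definition Hk (th : 'I_N -> 'rV[R]_q) (x : 'M[R]_(N, p)) (k : Edge e) : R :=
  h (sval k).1 (sval k).2 (row (sval k).1 x, row (sval k).2 x)
    (th (sval k).1) (th (sval k).2) - gam (sval k).1 (sval k).2.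

Definition Af (th : 'I_N -> 'rV[R]_q) (x : 'M[R]_(N, p)) : R :=
  \sum_(i < N) f i (row i x) (th i).

Lemma Lhat_split th x lam :
  Lhat f h gam del eps th x lam =
  Af th x + \sum_k (lam k * Hk th x k - del * eps / 2 * lam k ^+ 2).
Proof.
rewrite /Lhat big_split /=; congr (_ + _).
under eq_bigr do rewrite big_mkcond /=.
rewrite exchange_big /=; apply: eq_bigr => k _.
by rewrite -big_mkcond /= (big_pred1 (sval k).1) // => j; rewrite /= eq_sym.
Qed.

Lemma Lhat_upd th x lam k s :
  Lhat f h gam del eps th x (upd lam k s) =
  (Lhat f h gam del eps th x lam - (lam k * Hk th x k - del * eps / 2 * lam k ^+ 2))
  + (s * Hk th x k - del * eps / 2 * s ^+ 2).
Proof.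
rewrite !Lhat_split (bigD1 k) //= [in X in _ = X + _](bigD1 k) //=.
rewrite /upd eqxx.
under eq_bigr => k' nk do rewrite (negbTE nk).
ring.
Qed.

Lemma gradlamE th x lam k :
  gradlam f h gam del eps th x lam k = Hk th x k - del * eps * lam k.
Proof.
rewrite /gradlam derive1E.
have -> : (fun s => Lhat f h gam del eps th x (upd lam k s)) =
  (fun s => (Lhat f h gam del eps th x lam - (lam k * Hk th x k - del * eps / 2 * lam k ^+ 2))
            + (s * Hk th x k - del * eps / 2 * s ^+ 2)).
  by apply/funext => s; rewrite Lhat_upd.
rewrite dquad; congr (_ - _); congr (_ * _); by rewrite mulrC divfK // pnatr_eq0.
Qed.

Lemma lam_ineq th x (lam l : Edge e -> R) : 0 <= del * eps ->
  Lhat f h gam del eps th x l - Lhat f h gam del eps th x lam <=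
  \sum_k gradlam f h gam del eps th x lam k * (l k - lam k).
Proof.
move=> de; rewrite !Lhat_split.
have -> : forall a b c : R, a + b - (a + c) = b - c by move=> *; ring.
rewrite -sumrB; apply: ler_sum => k _; rewrite gradlamE.
have : 0 <= del * eps * (l k - lam k) ^+ 2 by apply: mulr_ge0 => //; exact: sqr_ge0.
nra.
Qed.

Lemma Lhat_diff th x (lam : Edge e -> R) :
  (forall i, differentiable (fun w => f i w (th i)) (row i x)) ->
  (forall k : Edge e, differentiable
     (fun w => h (sval k).1 (sval k).2 w (th (sval k).1) (th (sval k).2))
     (row (sval k).1 x, row (sval k).2 x)) ->
  differentiable (fun z => Lhat f h gam del eps th z lam) x.
Proof.
move=> df dh.
have -> : (fun z => Lhat f h gam del eps th z lam) =
  (fun z => Af th z) + (fun z => \sum_k (lam k * Hk th z k - del * eps / 2 * lam k ^+ 2)).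
  by apply/funext => z; rewrite Lhat_split.
apply: differentiableD.
  apply: diff_big => i _.
  have -> : (fun y => f i (row i y) (th i)) =
    (fun w => f i w (th i)) \o (fun z => row i z) by [].
  exact: (differentiable_comp (row_diff _ _ _ i x) (df i)).
apply: diff_big => k _.
pose k1 := (sval k).1; pose k2 := (sval k).2.
have -> : (fun z => lam k * Hk th z k - del * eps / 2 * lam k ^+ 2) =
  (lam k *: (((fun w => h k1 k2 w (th k1) (th k2)) \o (fun z => (row k1 z, row k2 z)))
      \- cst (gam k1 k2))) \- cst (del * eps / 2 * lam k ^+ 2).
  by apply/funext => z.
apply: differentiableB; last exact: differentiable_cst.
apply: differentiableZ; apply: differentiableB; last exact: differentiable_cst.
apply: differentiable_comp; last exact: dh.
by apply: differentiable_pair; exact: row_diff.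
Qed.

Lemma row_comb i (a : R) (x y : 'M[R]_(N, p)) :
  row i (a *: x + (1 - a) *: y) = a *: row i x + (1 - a) *: row i y.
Proof. by apply/rowP => j; rewrite !mxE. Qed.

Lemma Lhat_convex th (lam : Edge e -> R) (X : set 'rV[R]_p) :
  (forall i, convex_on X (fun w => f i w (th i))) ->
  (forall k : Edge e, convex_on (X `*` X)
     (fun w => h (sval k).1 (sval k).2 w (th (sval k).1) (th (sval k).2))) ->
  (forall k, 0 <= lam k) ->
  convex_on (prodset X) (fun z => Lhat f h gam del eps th z lam).
Proof.
move=> cf ch l0 x y a Px Py a01.
rewrite !Lhat_split.
have hA : Af th (a *: x + (1 - a) *: y) <= a * Af th x + (1 - a) * Af th y.
  rewrite /Af !mulr_sumr -big_split; apply: ler_sum => i _.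
  by rewrite row_comb; apply: cf => //.
set S := fun z => \sum_k (lam k * Hk th z k - del * eps / 2 * lam k ^+ 2).
have hS : S (a *: x + (1 - a) *: y) <= a * S x + (1 - a) * S y.
  rewrite /S !mulr_sumr -big_split; apply: ler_sum => k _.
  rewrite /Hk !row_comb.
  have := ch k (row (sval k).1 x, row (sval k).2 x) (row (sval k).1 y, row (sval k).2 y) a.
  move=> /(_ (conj (Px _) (Px _)) (conj (Py _) (Py _)) a01) H1.
  have := ler_wpM2l (l0 k) H1 => /= H2.
  nra.
suff -> : a * (Af th x + S x) + (1 - a) * (Af th y + S y) =
  (a * Af th x + (1 - a) * Af th y) + (a * S x + (1 - a) * S y) by exact: lerD.
ring.
Qed.
End LagLemmas.

Lemma cvx_grad (R : realType) (V : normedModType R) (C : set V) (F : V -> R) x y :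
  convex_on C F -> C x -> C y -> derivable F x (y - x) ->
  'D_(y - x) F x <= F y - F x.
Proof.
move=> cF Cx Cy dF.
rewrite /derive.
rewrite cvg_at_rightE; last exact: dF.
apply: limr_le.
  by apply/cvg_ex; eexists; apply: cvg_dnbhs_at_right; exact: dF.
near=> h.
have h0 : 0 < h by near: h; exact: nbhs_right_gt.
have h1 : h <= 1 by near: h; exact: nbhs_right_le.
have := cF y x h Cy Cx.
rewrite h1 ltW //= => /(_ isT) le.
rewrite /= -[X in X <= _]/(h^-1 * (F (h *: (y - x) + x) - F x)) ler_pdivrMl // mulrC.
have -> : h *: (y - x) + x = h *: y + (1 - h) *: x.
  by rewrite scalerBr scalerBl scale1r -addrA (addrC (- _)).
apply: le_trans (_ : h * F y + (1 - h) * F x - F x <= _); first by rewrite lerD2r.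
rewrite -subr_ge0; have -> : (F y - F x) * h - (h * F y + (1 - h) * F x - F x) = 0 by ring.
done.
Unshelve. all: by end_near. Qed.

Lemma div_step (R : realType) (eps a b g : R) : 0 < eps ->
  2 * eps * a <= b + eps ^+ 2 * g -> a <= 1 / (2 * eps) * b + eps / 2 * g.
Proof.
move=> e0 H.
have e2 : 0 < 2 * eps by rewrite mulr_gt0.
rewrite -(ler_pM2l e2).
have -> : 2 * eps * (1 / (2 * eps) * b + eps / 2 * g) = b + eps ^+ 2 * g.
  by field; rewrite gt_eqF.
exact: H.
Qed.

Theorem lemma1 (R : realType) (N p q : nat) (e : rel 'I_N)
  (X : set 'rV[R]_p) (Theta : 'I_N -> set 'rV[R]_q)
  (f : 'I_N -> 'rV[R]_p -> 'rV[R]_q -> R)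
  (h : 'I_N -> 'I_N -> 'rV[R]_p * 'rV[R]_p -> 'rV[R]_q -> 'rV[R]_q -> R)
  (gam : 'I_N -> 'I_N -> R) (eps del : R)
  (tau : 'I_N -> nat -> nat) (taub : nat)
  (theta : 'I_N -> nat -> 'rV[R]_q)
  (x : nat -> 'M[R]_(N, p)) (lam : nat -> Edge e -> R) :
  (* (A1): symmetric, connected graph *)
  (forall i j, e i j = e j i) ->
  (forall i j, connect e i j) ->
  (* X nonempty, compact, convex *)
  X !=set0 -> compact X -> convex_set_ X ->
  (* f^i convex and differentiable in its first argument *)
  (forall i th, Theta i th ->
     convex_on X (fun y => f i y th) /\
     (forall y, X y -> differentiable (fun z => f i z th) y)) ->
  (* h^ij jointly convex and differentiable in its first two arguments *)
  (forall i j thi thj, e i j -> Theta i thi -> Theta j thj ->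
     convex_on (X `*` X) (fun z => h i j z thi thj) /\
     (forall z, (X `*` X) z -> differentiable (fun w => h i j w thi thj) z)) ->
  (forall i j, e i j -> 0 <= gam i j) ->
  0 < eps -> 0 < del ->
  (* data realizations *)
  (forall i t, (1 <= t)%N -> Theta i (theta i t)) ->
  (* delays, and (A6) *)
  (forall i t, (1 <= t)%N -> (tau i t < t)%N) ->
  (forall i t, (2 <= t)%N -> (tau i t <= (tau i t.-1).+1)%N) ->
  (forall i t, (1 <= t)%N -> (tau i t <= taub)%N) ->
  (* the algorithm *)
  prodset X (x 1%N) ->
  (forall k, lam 1%N k = 0) ->
  let th t := fun i => theta i (t - tau i t)%N in
  let xd t := \matrix_(i, k) x (t - tau i t)%N i k in
  (forall t, (1 <= t)%N ->
     is_proj (prodset X)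
       (x t - eps *: gradx f h gam del eps (th t) (xd t) (lam t)) (x t.+1)) ->
  (forall t k, (1 <= t)%N ->
     lam t.+1 k = Num.max 0 (lam t k + eps * gradlam f h gam del eps (th t) (xd t) (lam t) k)) ->
  (* conclusion *)
  forall t, (1 <= t)%N ->
  forall (y : 'M[R]_(N, p)) (l : Edge e -> R),
    prodset X y -> (forall k, 0 <= l k) ->
    Lhat f h gam del eps (th t) (xd t) l - Lhat f h gam del eps (th t) y (lam t)
    <= 1 / (2 * eps) * (sqn (x t - y) - sqn (x t.+1 - y)
                        + sqnl (fun k => lam t k - l k) - sqnl (fun k => lam t.+1 k - l k))
       + eps / 2 * (sqnl (gradlam f h gam del eps (th t) (xd t) (lam t))
                    + sqn (gradx f h gam del eps (th t) (xd t) (lam t)))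
       + ip (gradx f h gam del eps (th t) (xd t) (lam t)) (xd t - x t).

Proof.
move=> esym conn Xne Xc Xcvx fcvx hcvx gam0 eps0 del0 Th taul tau2 taubd x1 lam1
  th xd Hx Hl t t1 y l Py l0.
have xin : forall s, (1 <= s)%N -> prodset X (x s).
  elim=> [//|s IH] _; case: s IH => [|s] IH; first exact: x1.
  by have [] := Hx s.+1 isT.
have lamge0 : forall s, (1 <= s)%N -> forall k, 0 <= lam s k.
  elim=> [//|s IH] _ k; case: s IH => [|s] IH; first by rewrite lam1.
  by rewrite Hl // le_max lexx.
have tpos : forall i, (1 <= t - tau i t)%N by move=> i; rewrite subn_gt0 taul.
have xdin : prodset X (xd t).
  move=> i; have -> : row i (xd t) = row i (x (t - tau i t)%N).
    by apply/rowP => j; rewrite !mxE.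
  exact: (xin _ (tpos i)).
have Thi : forall i, Theta i (th t i) by move=> i; exact: Th.
set gx := gradx f h gam del eps (th t) (xd t) (lam t).
set gl := gradlam f h gam del eps (th t) (xd t) (lam t).
pose F := fun z => Lhat f h gam del eps (th t) z (lam t).
have dF : differentiable F (xd t).
  apply: Lhat_diff.
    by move=> i; apply: (fcvx i _ (Thi i)).2; exact: xdin.
  move=> k; apply: (hcvx _ _ _ _ (proj2_sig k) (Thi _) (Thi _)).2.
  by split; exact: xdin.
have cF : convex_on (prodset X) F.
  apply: Lhat_convex.
  - by move=> i; exact: (fcvx i _ (Thi i)).1.
  - by move=> k; exact: (hcvx _ _ _ _ (proj2_sig k) (Thi _) (Thi _)).1.
  - exact: lamge0.
have stepX : F (xd t) - F y <= ip gx (xd t - y).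
  have dd : derivable F (xd t) (y - xd t) by exact: diff_derivable.
  have := @cvx_grad _ _ _ _ _ _ cF xdin Py dd.
  rewrite -(@ip_mgrad _ _ _ _ _ (y - xd t) dF).
  change (mgrad F (xd t)) with gx.
  by rewrite -opprB ipNr; lra.
have cX : forall (u v : 'M[R]_(N, p)) (a : R), prodset X u -> prodset X v -> 0 <= a <= 1 ->
    prodset X (a *: u + (1 - a) *: v).
  move=> u v a Pu Pv a01; rewrite /prodset /= => i. rewrite row_comb; apply: Xcvx => //.

have projX := @proj_nonexp _ _ _ _ _ _ _ cX (Hx t t1) Py.
have eqX : x t - eps *: gx - y = (x t - y) + (- eps) *: gx.
  by apply/matrixP => i j; rewrite !mxE; ring.
rewrite eqX (sqnD _ _ _ (x t - y)) sqnZ ipZr ipC in projX.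
have EX : ip gx (x t - y) <= 1 / (2 * eps) * (sqn (x t - y) - sqn (x t.+1 - y))
                              + eps / 2 * sqn gx.
  apply: div_step => //.
  rewrite sqrrN in projX.
  lra.
have stepL := @lam_ineq _ _ _ _ _ f h gam del eps (th t) (xd t) (lam t) l (ltW (mulr_gt0 del0 eps0)).
rewrite -/gl in stepL.
set SL := \sum_k gl k * (l k - lam t k) in stepL.
have projL : sqnl (fun k => lam t.+1 k - l k) <=
    sqnl (fun k => lam t k - l k) - 2 * eps * SL + eps ^+ 2 * sqnl gl.
  rewrite /sqnl /SL mulr_sumr -sumrN mulr_sumr -!big_split /=.
  apply: ler_sum => k _.
  rewrite Hl //.
  have lk := l0 k; have lamk := lamge0 t t1 k.
  case: (leP 0 (lam t k + eps * gl k)) => z0.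
    nra.

  nra.
have EL : SL <= 1 / (2 * eps) * (sqnl (fun k => lam t k - l k)
                                - sqnl (fun k => lam t.+1 k - l k)) + eps / 2 * sqnl gl.
  apply: div_step => //; lra.
have ipsplit : ip gx (xd t - y) = ip gx (xd t - x t) + ip gx (x t - y).
  by rewrite -ipDr addrA subrK.
rewrite ipsplit in stepX.
rewrite /F in stepX.
set A1 := sqn (x t - y); set A2 := sqn (x t.+1 - y).
set B1 := sqnl _; set B2 := sqnl _.
rewrite -/A1 -/A2 in EX. rewrite -/B1 -/B2 in EL.
have -> : 1 / (2 * eps) * (A1 - A2 + B1 - B2) =
   1 / (2 * eps) * (A1 - A2) + 1 / (2 * eps) * (B1 - B2) by ring.
have -> : eps / 2 * (sqnl gl + sqn gx) = eps / 2 * sqnl gl + eps / 2 * sqn gx by ring.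
lra.
Qed.
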